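(* Let $R$ be a commutative Noetherian ring of prime characteristic $p$ and $G$ an $x$-torsion-free left $R[x,f]$-module. Then both the set $\mathcal{A}(G)$ of special annihilator submodules of $G$ and the set $\mathcal{I}(G)$ of $G$-special $R$-ideals are closed under arbitrary intersections.
   Context: $R[x,f]$ is the Frobenius skew polynomial ring: free left $R$-module on $(x^i)_{i\ge0}$, $xr=r^px$. $x$-torsion-free: $xg=0\Rightarrow g=0$. A special annihilator submodule of $G$ is one of the form $\{g:\theta g=0\ \forall\theta\in\mathfrak{B}\}$ for a graded two-sided ideal $\mathfrak{B}=\bigoplus_n\mathfrak{b}_nx^n$ ($(\mathfrak{b}_n)$ an ascending chain of ideals). $\operatorname{grann}N$ is the set of $\sum r_ix^i$ with each $r_ix^i$ annihilating $N$. $\mathcal{I}(G)$ is the set of ideals $\mathfrak{b}$ of $R$ with $\operatorname{grann}N=\bigoplus_n\mathfrak{b}x^n$ for some $R[x,f]$-submodule $N$ of $G$. *)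

(* Defs.v *)
From HB Require Import structures.
From mathcomp Require Import all_boot all_order all_algebra.
Set Implicit Arguments. Unset Strict Implicit. Unset Printing Implicit Defensive.
Import GRing.Theory.
Local Open Scope ring_scope.

Definition is_ideal (R : comNzRingType) (I : R -> Prop) : Prop :=
  [/\ I 0, (forall a b, I a -> I b -> I (a - b)) & (forall r a, I a -> I (r * a))].

Definition noetherian (R : comNzRingType) : Prop :=
  forall I : nat -> R -> Prop, (forall n, is_ideal (I n)) ->
    (forall n r, I n r -> I n.+1 r) ->
    exists m, forall n, (m <= n)%N -> forall r, I n r -> I m r.

(* A left R[x,f]-module (f the Frobenius r |-> r^p) is an R-module G together with
   the action phi : G -> G of x, which is additive and satisfies
   x (r g) = (x r) g = (r^p x) g = r^p (x g). *)
Definition frob_action (R : comNzRingType) (p : nat) (G : lmodType R) (phi : G -> G) : Prop :=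
  (forall g h, phi (g + h) = phi g + phi h) /\ (forall (r : R) g, phi (r *: g) = r ^+ p *: phi g).

(* Elements theta = sum_i r_i x^i of R[x,f] are represented by their coefficient
   sequence [:: r_0; r_1; ...] (R[x,f] is a free left R-module on the x^i). *)
Definition skewpoly (R : comNzRingType) := seq R.

Definition skew_act (R : comNzRingType) (G : lmodType R) (phi : G -> G)
  (theta : skewpoly R) (g : G) : G :=
  \sum_(i < size theta) theta`_i *: iter i phi g.

(* (b_n)_n is an ascending chain of ideals; the graded two-sided ideal is
   B = (+)_n b_n x^n. *)
Definition asc_ideal_chain (R : comNzRingType) (b : nat -> R -> Prop) : Prop :=
  (forall n, is_ideal (b n)) /\ (forall n r, b n r -> b n.+1 r).

Definition in_graded (R : comNzRingType) (b : nat -> R -> Prop) (theta : skewpoly R) : Prop :=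
  forall i, b i theta`_i.

Definition ann_sub (R : comNzRingType) (G : lmodType R) (phi : G -> G)
  (b : nat -> R -> Prop) : G -> Prop :=
  fun g => forall theta, in_graded b theta -> skew_act phi theta g = 0.

Definition special_ann (R : comNzRingType) (G : lmodType R) (phi : G -> G)
  (N : G -> Prop) : Prop :=
  exists b, asc_ideal_chain b /\ forall g, N g <-> ann_sub phi b g.

Definition is_submod (R : comNzRingType) (G : lmodType R) (phi : G -> G)
  (N : G -> Prop) : Prop :=
  [/\ N 0, (forall g h, N g -> N h -> N (g + h)),
      (forall (r : R) g, N g -> N (r *: g)) & (forall g, N g -> N (phi g))].

Definition grann (R : comNzRingType) (G : lmodType R) (phi : G -> G)
  (N : G -> Prop) : skewpoly R -> Prop :=
  fun theta => forall i g, N g -> theta`_i *: iter i phi g = 0.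

Definition G_special_ideal (R : comNzRingType) (G : lmodType R) (phi : G -> G)
  (b : R -> Prop) : Prop :=
  is_ideal b /\
  exists N, is_submod phi N /\
    forall theta, grann phi N theta <-> in_graded (fun _ => b) theta.

(* Main.v *)
Require Import Defs.
From Stdlib Require Import ClassicalEpsilon.
From HB Require Import structures.
From mathcomp Require Import all_boot all_order all_algebra.
Import GRing.Theory.
Local Open Scope ring_scope.

Definition single {R : comNzRingType} (i : nat) (r : R) : seq R := rcons (nseq i 0) r.

Lemma nth_single (R : comNzRingType) (i : nat) (r : R) (k : nat) :
  (single i r)`_k = if k == i then r else 0.
Proof.
rewrite /single nth_rcons size_nseq nth_nseq.
by case: (ltngtP k i).
Qed.

Lemma skew_single (R : comNzRingType) (G : lmodType R) (phi : G -> G) (i : nat) (a : R) (g : G) :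
  skew_act phi (single i a) g = a *: iter i phi g.
Proof.
rewrite /skew_act.
have -> : size (single i a) = i.+1 by rewrite /single size_rcons size_nseq.
rewrite big_ord_recr /= big1 ?add0r; first by rewrite nth_single eqxx.
move=> k _; rewrite nth_single /= ifF ?scale0r //.
by apply/negbTE; rewrite neq_ltn ltn_ord.
Qed.

Theorem corollary1p12 (R : comNzRingType) (p : nat) (hp : prime p)
  (hchar : p \in [pchar R]) (hnoeth : noetherian R)
  (G : lmodType R) (phi : G -> G) (hphi : frob_action p phi)
  (htf : forall g : G, phi g = 0 -> g = 0) :
  (forall (J : Type) (N : J -> G -> Prop),
      (forall j, special_ann phi (N j)) ->
      special_ann phi (fun g => forall j, N j g)) /\
  (forall (J : Type) (B : J -> R -> Prop),
      (forall j, G_special_ideal phi (B j)) ->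
      G_special_ideal phi (fun r => forall j, B j r)).
Proof.
have annI : forall v : G, is_ideal (fun r : R => r *: v = 0).
  move=> v; split; first by rewrite scale0r.
  - by move=> a b ha hb; rewrite scalerBl ha hb subrr.
  - by move=> r a ha; rewrite -scalerA ha scaler0.
split.
- move=> J N hN.
  have [bs hbs] : exists bs : J -> nat -> R -> Prop,
      forall j, asc_ideal_chain (bs j) /\ forall g, N j g <-> ann_sub phi (bs j) g.
    exists (fun j => projT1 (constructive_indefinite_description _ (hN j))).
    by move=> j; case: (constructive_indefinite_description _ (hN j)).
  pose S := fun n (r : R) => forall I : R -> Prop, is_ideal I ->
      (forall j a, bs j n a -> I a) -> I r.
  exists S; split.
    split.
    + move=> n; split.
      * by move=> I [h0 _ _].
      * by move=> a b ha hb I hI hsub; case: (hI) => _ hB _; apply: hB; [apply: ha|apply: hb].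
      * by move=> r a ha I hI hsub; case: (hI) => _ _ hM; apply: hM; apply: ha.
    + move=> n r hr I hI hsub; apply: hr => // j a ha; apply: (hsub j).
      by case: (hbs j) => [[_ hc] _]; apply: hc.
  move=> g; split.
  + move=> hg theta hth; rewrite /skew_act big1 // => i _.
    apply: (hth i (fun r => r *: iter i phi g = 0)) => [|j a ha]; first exact: annI.
    case: (hbs j) => [[hid _] he].
    have := (proj1 (he g) (hg j) (single i a)).
    rewrite skew_single; apply => k; rewrite nth_single.
    case: eqP => [->|_] //; by case: (hid k).
  + move=> hg j; case: (hbs j) => [_ he]; apply/he => theta hth.
    apply: hg => i I hI hsub; apply: (hsub j); exact: hth.
- move=> J B hB.
  case: hphi => hadd hscal.
  have phi0 : phi 0 = 0.
    by apply: (@addrI _ (phi 0)); rewrite -hadd !addr0.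
  have iter0 : forall i, iter i phi 0 = 0.
    by elim=> //= i ->; rewrite phi0.
  have iterD : forall i g h, iter i phi (g + h) = iter i phi g + iter i phi h.
    by elim=> //= i IH g h; rewrite IH hadd.
  have iterZ : forall i (c : R) g, iter i phi (c *: g) = c ^+ (p ^ i) *: iter i phi g.
    by elim=> [|i IH] c g /=; rewrite ?expr1 // IH hscal -exprM expnSr.
  pose M := fun g => forall i r, (forall j, B j r) -> r *: iter i phi g = 0.
  have [Ns hNs] : exists Ns : J -> G -> Prop, forall j,
      is_ideal (B j) /\ is_submod phi (Ns j) /\
      forall theta, grann phi (Ns j) theta <-> in_graded (fun _ => B j) theta.
    exists (fun j => projT1 (constructive_indefinite_description _ (proj2 (hB j)))).
    move=> j; case: (constructive_indefinite_description _ (proj2 (hB j))) => /= N [h1 h2].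
    by split => //; case: (hB j).
  have sub : forall j g, Ns j g -> M g.
    move=> j g hg i r hr; case: (hNs j) => [hid [_ he]].
    have := proj2 (he (single i r)) _ i g hg; rewrite nth_single eqxx; apply.
    move=> k; rewrite nth_single; case: eqP => _; first exact: hr.
    by case: hid.
  split.
    split.
    + by move=> j; case: (hNs j) => [[]].
    + by move=> a b ha hb j; case: (hNs j) => [[_ hD _] _]; apply: hD.
    + by move=> r a ha j; case: (hNs j) => [[_ _ hM] _]; apply: hM.
  exists M; split.
    split.
    + by move=> i r _; rewrite iter0 scaler0.
    + by move=> g h hg hh i r hr; rewrite iterD scalerDr hg // hh // addr0.
    + by move=> c g hg i r hr; rewrite iterZ scalerA mulrC -scalerA hg // scaler0.
    + by move=> g hg i r hr; rewrite -iterSr; apply: hg.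
  move=> theta; split.
  + move=> hth k j; case: (hNs j) => [_ [_ he]].
    apply: (proj1 (he theta)) => i g hg; apply: hth; exact: sub hg.
  + by move=> hth i g hg; apply: hg; apply: hth.
Qed.
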